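(* Let $\Lambda=K\mathcal{Q}/I$ be a finite-dimensional algebra over a field $K$ as in the context, let $A\geqslant1$, let $\tilde{\Lambda}=\tilde{\Lambda}_A$ be its stretched algebra and $\varepsilon=\sum_{v\in\mathcal{Q}_0}v\in\tilde{\Lambda}$. For an arrow $\alpha$ of $\mathcal{Q}$ with new vertices $w_1,\dots,w_{A-1}$, let $$X_\alpha=\big(\tilde{\Lambda}w_1\tilde{\Lambda}+\cdots+\tilde{\Lambda}w_{A-1}\tilde{\Lambda}+\tilde{\Lambda}\varepsilon\tilde{\Lambda}\big)/\tilde{\Lambda}\varepsilon\tilde{\Lambda}.$$ Then $\dim_KX_\alpha=A(A-1)/2$, and $\dim_K\tilde{\Lambda}/\langle\varepsilon\rangle=m_1A(A-1)/2$, where $m_1$ is the number of arrows of $\mathcal{Q}$ and $\langle\varepsilon\rangle=\tilde{\Lambda}\varepsilon\tilde{\Lambda}$.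
   Context: Conventions: $\mathcal{Q}$ is a finite quiver with vertex set $\mathcal{Q}_0$; $\mathfrak{o}(\alpha)$, $\mathfrak{t}(\alpha)$ denote start and end of an arrow; paths are written left to right. An element $x\in K\mathcal{Q}$ is uniform if $x=vx=xv'$ for vertices $v,v'$. $\Lambda=K\mathcal{Q}/I$ is finite-dimensional with $I$ an admissible ideal generated by a minimal set $\{g^2_1,\dots,g^2_m\}$ of uniform elements. Stretched algebra: for $A\geqslant1$, the quiver $\tilde{\mathcal{Q}}_A$ has all vertices of $\mathcal{Q}$ plus, for each arrow $\alpha$ of $\mathcal{Q}$, new vertices $w_1,\dots,w_{A-1}$; each arrow $\alpha$ is replaced by arrows $\alpha_1,\dots,\alpha_A$ with $\mathfrak{o}(\alpha_1)=\mathfrak{o}(\alpha)$, $\mathfrak{t}(\alpha_j)=\mathfrak{o}(\alpha_{j+1})=w_j$ ($1\le j\le A-1$), $\mathfrak{t}(\alpha_A)=\mathfrak{t}(\alpha)$, and the only arrows incident with $w_j$ are $\alpha_j,\alpha_{j+1}$. $\theta^*:K\mathcal{Q}\to K\tilde{\mathcal{Q}}_A$ is the algebra homomorphism fixing vertices and sending $\alpha\mapsto\alpha_1\cdots\alpha_A$; $\tilde{I}_A$ is the ideal generated by $\theta^*(g^2_1),\dots,\theta^*(g^2_m)$; $\tilde{\Lambda}_A=K\tilde{\mathcal{Q}}_A/\tilde{I}_A$. *)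

(* Defs.v *)
From HB Require Import structures.
From mathcomp Require Import all_boot all_algebra finmap.
From mathcomp Require Import monalg.

Set Implicit Arguments.
Unset Strict Implicit.
Unset Printing Implicit Defensive.

Import GRing.Theory.
Local Open Scope ring_scope.

Section Quiver.
Variables (V E : finType) (src tgt : E -> V).

Definition is_qpath (x : V * seq E) : bool :=
  if x.2 is a :: es then (src a == x.1) && path (fun a b => tgt a == src b) a es
  else true.

Definition qpath := {x : V * seq E | is_qpath x}.

Definition pend (x : V * seq E) : V := last x.1 (map tgt x.2).

Definition pcat (x y : V * seq E) : option (V * seq E) :=
  if pend x == y.1 then Some (x.1, x.2 ++ y.2) else None.

Definition plen (p : qpath) : nat := size (val p).2.

Variable F : fieldType.

Definition KQ := {malg F[qpath]}.

Definition pb (x : V * seq E) : KQ :=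
  if insub x is Some p then << p >> else 0.

Definition mulq (f g : KQ) : KQ :=
  \sum_(p <- msupp f) \sum_(q <- msupp g)
     (f@_p * g@_q) *: (if pcat (val p) (val q) is Some r then pb r else 0).

Definition vertex (v : V) : KQ := pb (v, [::]).

Definition uniform (x : KQ) : Prop :=
  exists v v' : V, x = mulq (vertex v) x /\ x = mulq x (vertex v').

Definition ideal_gen (P : KQ -> Prop) : KQ -> Prop := fun f =>
  exists ts : seq (KQ * KQ * KQ),
    (forall t, t \in ts -> P t.1.2) /\
    f = \sum_(t <- ts) mulq (mulq t.1.1 t.1.2) t.2.

Definition arrow_ideal_pow (k : nat) : KQ -> Prop :=
  ideal_gen (fun f => exists p : qpath, plen p = k /\ f = << p >>).

Definition admissible (I : KQ -> Prop) : Prop :=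
  exists m, (2 <= m)%N /\ (forall f, arrow_ideal_pow m f -> I f) /\
            (forall f, I f -> arrow_ideal_pow 2 f).

Definition minimal_gens (g : seq KQ) : Prop :=
  forall S : seq KQ, {subset S <= g} ->
    (forall f, ideal_gen (fun x => x \in g) f -> ideal_gen (fun x => x \in S) f) ->
    {subset g <= S}.

End Quiver.

(* Dimension of a quotient U / W of subspaces W <= U of an F-vector    *)
(* space M: dim_F (U/W) = n iff there are v_1..v_n in U whose classes  *)
(* form a basis of U/W (independent modulo W, spanning U modulo W).    *)
Definition quot_dim (F : fieldType) (M : lmodType F) (U W : M -> Prop)
    (n : nat) : Prop :=
  exists v : 'I_n -> M,
    (forall i, U (v i)) /\
    (forall c : 'I_n -> F, W (\sum_i c i *: v i) -> forall i, c i = 0) /\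
    (forall u, U u -> exists c : 'I_n -> F, W (u - \sum_i c i *: v i)).

(* Stretched quiver, with n = A - 1.  New vertices: (alpha, k), k : 'I_n *)
(* (0-based; (alpha,k) is w_{k+1} of the paper).  New arrows           *)
(* (alpha, j), j : 'I_(n+1) (0-based; (alpha,j) is alpha_{j+1}).       *)
Section Stretch.
Variables (V E : finType) (src tgt : E -> V) (n : nat).

Definition sV : finType := (V + (E * 'I_n))%type.
Definition sE : finType := (E * 'I_n.+1)%type.

Definition ssrc (e : sE) : sV :=
  match unlift ord0 e.2 with
  | Some k => inr (e.1, k)
  | None => inl (src e.1)
  end.

Definition stgt (e : sE) : sV :=
  match unlift ord_max e.2 with
  | Some k => inr (e.1, k)
  | None => inl (tgt e.1)
  end.

Definition stretch_path (x : V * seq E) : sV * seq sE :=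
  (inl x.1, flatten [seq [seq (a, j) | j <- enum 'I_n.+1] | a <- x.2]).

Variable F : fieldType.

Definition theta (f : KQ src tgt F) : KQ ssrc stgt F :=
  \sum_(p <- msupp f) f@_p *: pb ssrc stgt F (stretch_path (val p)).

Definition eps : KQ ssrc stgt F := \sum_(v : V) vertex ssrc stgt F (inl v).

Definition wvert (alpha : E) (k : 'I_n) : KQ ssrc stgt F :=
  vertex ssrc stgt F (inr (alpha, k)).

End Stretch.

(* Main.v *)
Require Import Defs.
From HB Require Import structures.
From mathcomp Require Import all_boot all_algebra finmap.
From mathcomp Require Import monalg.
From mathcomp Require Import zify.

Module G1.

Set Implicit Arguments.
Unset Strict Implicit.
Unset Printing Implicit Defensive.
Import GRing.Theory.
Local Open Scope ring_scope.

Section General.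
Variables (V E : finType) (src tgt : E -> V) (F : fieldType).
Local Notation M := (KQ src tgt F).
Local Notation P := (qpath src tgt).
Local Notation qm := (@Defs.mulq V E src tgt F).
Local Notation pbq := (pb src tgt F).

Definition Cq (p q : P) : M :=
  if pcat tgt (val p) (val q) is Some r then pbq r else 0.

Lemma mulqEw (f g : M) (d1 d2 : {fset P}) :
  (msupp f `<=` d1)%fset -> (msupp g `<=` d2)%fset ->
  qm f g = \sum_(p <- d1) \sum_(q <- d2) (f@_p * g@_q) *: Cq p q.
Proof.
move=> le1 le2; rewrite /Defs.mulq (big_fset_incl _ le1) /=; last first.
  move=> p _ /mcoeff_outdom ->; apply: big1 => q _; by rewrite mul0r scale0r.
apply: eq_bigr => p _; rewrite (big_fset_incl _ le2) //= => q _ /mcoeff_outdom ->.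
by rewrite mulr0 scale0r.
Qed.

Lemma mulqDr (f g1 g2 : M) : qm f (g1 + g2) = qm f g1 + qm f g2.
Proof.
have s1 : (msupp g1 `<=` (msupp g1 `|` msupp g2)%fset)%fset by apply: fsubsetUl.
have s2 : (msupp g2 `<=` (msupp g1 `|` msupp g2)%fset)%fset by apply: fsubsetUr.
rewrite !(@mulqEw _ _ (msupp f) ((msupp g1 `|` msupp g2)%fset)) ?fsubset_refl ?msuppD_le //.
rewrite -big_split; apply: eq_bigr => p _; rewrite -big_split; apply: eq_bigr => q _.
by rewrite mcoeffD mulrDr scalerDl.
Qed.

Lemma mulq0r (f : M) : qm f 0 = 0.
Proof.
rewrite /Defs.mulq; apply: big1 => p _; apply: big1 => q _.
by rewrite mcoeff0 mulr0 scale0r.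
Qed.

Lemma mulq_sumr (f : M) I (s : seq I) (G : I -> M) :
  qm f (\sum_(i <- s) G i) = \sum_(i <- s) qm f (G i).
Proof.
elim: s => [|i s IH]; first by rewrite !big_nil mulq0r.
by rewrite !big_cons mulqDr IH.
Qed.

Lemma mulqUU (c d : F) (a b : P) :
  qm << c *g a >> << d *g b >> = (c * d) *: Cq a b.
Proof.
rewrite (@mulqEw _ _ [fset a]%fset [fset b]%fset) ?msuppU_le //.
by rewrite !big_seq_fset1 !mcoeffUU.
Qed.

Lemma pb_val (p : P) : pbq (val p) = << p >>.
Proof. by rewrite /pb valK. Qed.

Lemma pb_coef x (r : P) : (pbq x)@_r != 0 -> val r = x.
Proof.
rewrite /pb; case: insubP => [p _ <-|_]; last by rewrite mcoeff0 eqxx.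
rewrite mcoeffU; case: (eqVneq p r) => [->//|ne]; by rewrite mulr0n eqxx.
Qed.

Lemma t3 (c : F) (k k' : P) : c * (<< k >> : M)@_k' = c *+ (k == k').
Proof. rewrite mcoeffU. by rewrite mulr_natr. Qed.
Lemma t4 (c : F) (k k' : P) : (<< c *g k >> : M)@_k' = c *+ (k == k').
Proof. by rewrite mcoeffU. Qed.
Lemma scaleU (c : F) (k : P) : c *: (<< k >> : M) = (<< c *g k >> : M).
Proof. apply/malgP => k'. rewrite mcoeffZ. exact: (etrans (t3 c k k') (esym (t4 c k k'))). Qed.

Lemma mcoeff_sum (I : Type) (s : seq I) (G : I -> M) (r : P) :
  (\sum_(i <- s) G i)@_r = \sum_(i <- s) (G i)@_r.
Proof. exact: raddf_sum. Qed.

Lemma mulq_coef0 (f g : M) (r : P) :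
  (forall p q, p \in msupp f -> q \in msupp g ->
     pcat tgt (val p) (val q) <> Some (val r)) -> (qm f g)@_r = 0.
Proof.
move=> H; rewrite /Defs.mulq raddf_sum /= big_seq big1 // => p pf.
rewrite raddf_sum /= big_seq big1 // => q qg; rewrite mcoeffZ.
case Ep: pcat => [x|]; last by rewrite mcoeff0 mulr0.
case: (eqVneq ((pbq x)@_r) 0) => [->|/pb_coef ex]; first by rewrite mulr0.
by case: (H p q pf qg); rewrite Ep ex.
Qed.

Definition vis (x : V * seq E) : seq V := x.1 :: map tgt x.2.

Lemma has_vis_pcat (h : pred V) x y z : pcat tgt x y = Some z ->
  has h (vis z) = has h (vis x) || has h (vis y).
Proof.
rewrite /pcat; case: eqP => // eq [<-].
have Hl : h (pend tgt x) -> has h (vis x).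
  by move=> hp; apply/hasP; exists (pend tgt x) => //; apply: mem_last.
move: Hl; rewrite /vis /= map_cat has_cat -eq.
by case: (h x.1); case: (has h (map tgt x.2)); case: (has h (map tgt y.2));
   case: (h (pend tgt x)) => //= ->.
Qed.

Definition Hs (h : pred V) (f : M) :=
  forall r : P, ~~ has h (vis (val r)) -> f@_r = 0.

Lemma Hs_mulql h f g : Hs h f -> Hs h (qm f g).
Proof.
move=> Hf r hr; apply: mulq_coef0 => p q pf qg Ep.
have := has_vis_pcat h Ep; rewrite (negbTE hr) => /esym /norP [hp _].
by move: pf; rewrite -mcoeff_neq0 Hf // eqxx.
Qed.

Lemma Hs_mulqr h f g : Hs h g -> Hs h (qm f g).
Proof.
move=> Hg r hr; apply: mulq_coef0 => p q pf qg Ep.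
have := has_vis_pcat h Ep; rewrite (negbTE hr) => /esym /norP [_ hq].
by move: qg; rewrite -mcoeff_neq0 Hg // eqxx.
Qed.

Lemma Hs_sum h (I : eqType) (s : seq I) (G : I -> M) :
  (forall i, i \in s -> Hs h (G i)) -> Hs h (\sum_(i <- s) G i).
Proof.
move=> H r hr; rewrite raddf_sum /= big_seq big1 // => i /H Hi; exact: Hi.
Qed.

Lemma Hs_scale h c f : Hs h f -> Hs h (c *: f).
Proof. by move=> H r hr; rewrite mcoeffZ H // mulr0. Qed.

Lemma Hs_pb h x : has h (vis x) -> Hs h (pbq x).
Proof.
move=> hx r hr; apply/eqP; apply/negPn/negP => /pb_coef ex; move: hr; by rewrite ex hx.
Qed.

Lemma Hs_mono (h1 h2 : pred V) f : (forall v, h1 v -> h2 v) -> Hs h1 f -> Hs h2 f.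
Proof.
move=> sub H r hr; apply: H; apply: contra hr; exact: sub_has.
Qed.

Lemma Hs_ideal h (Q : M -> Prop) f :
  (forall x, Q x -> Hs h x) -> ideal_gen Q f -> Hs h f.
Proof.
move=> HQ [ts [Hts ->]]; apply: Hs_sum => t tin.
apply: Hs_mulql; apply: Hs_mulqr; exact: HQ (Hts t tin).
Qed.

Lemma ideal0 (Q : M -> Prop) : ideal_gen Q 0.
Proof. by exists [::]; split => //; rewrite big_nil. Qed.

Lemma idealD (Q : M -> Prop) f g : ideal_gen Q f -> ideal_gen Q g -> ideal_gen Q (f + g).
Proof.
move=> [t1 [H1 ->]] [t2 [H2 ->]]; exists (t1 ++ t2); split; last by rewrite big_cat.
by move=> t; rewrite mem_cat => /orP [/H1|/H2].
Qed.

Lemma ideal_sum (Q : M -> Prop) (I : eqType) (s : seq I) (G : I -> M) :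
  (forall i, i \in s -> ideal_gen Q (G i)) -> ideal_gen Q (\sum_(i <- s) G i).
Proof.
elim: s => [|i s IH] H; first by rewrite big_nil; apply: ideal0.
rewrite big_cons; apply: idealD; first by apply: H; rewrite mem_head.
by apply: IH => j js; apply: H; rewrite in_cons js orbT.
Qed.

Lemma ideal_term (Q : M -> Prop) a x b : Q x -> ideal_gen Q (qm (qm a x) b).
Proof.
by move=> Qx; exists [:: (a, x, b)]; split; [move=> t; rewrite mem_seq1 => /eqP -> | rewrite big_seq1].
Qed.

Lemma path_qpath a es :
  path (fun a b => tgt a == src b) a es = is_qpath src tgt (tgt a, es).
Proof. by case: es => //= b es; rewrite eq_sym. Qed.

Lemma qpath_cons v a es : is_qpath src tgt (v, a :: es) =
  (src a == v) && is_qpath src tgt (tgt a, es).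
Proof. by rewrite -path_qpath. Qed.

Lemma qpath_cat v es1 es2 : is_qpath src tgt (v, es1 ++ es2) =
  is_qpath src tgt (v, es1) && is_qpath src tgt (pend tgt (v, es1), es2).
Proof.
elim: es1 v => [|a es1 IH] v //.
by rewrite cat_cons !qpath_cons IH andbA.
Qed.

Lemma pb_triv_l u (c : F) (q : P) :
  qm (pbq (u, [::])) << c *g q >> = if u == (val q).1 then << c *g q >> else 0.
Proof.
have t : is_qpath src tgt (u, [::]) by [].
rewrite /pb insubT mulqUU mul1r /Cq /pcat /=.
case: eqP => [eu|_]; last by rewrite scaler0.
have eu' : u = (val q).1 by exact: eu.
have -> : (u, (val q).2) = val q by rewrite eu'; case: (val q).
by rewrite pb_val scaleU.
Qed.

Lemma pb_triv_r u (c : F) (q : P) :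
  qm << c *g q >> (pbq (u, [::])) = if pend tgt (val q) == u then << c *g q >> else 0.
Proof.
have t : is_qpath src tgt (u, [::]) by [].
rewrite /pb insubT mulqUU mulr1 /Cq /pcat /=.
case: eqP => [eu|_]; last by rewrite scaler0.
have -> : ((val q).1, (val q).2 ++ [::]) = val q by rewrite cats0; case: (val q).
by rewrite pb_val scaleU.
Qed.

End General.

End G1.
Import G1.

Module S2.

Set Implicit Arguments.
Unset Strict Implicit.
Unset Printing Implicit Defensive.
Import GRing.Theory.
Local Open Scope ring_scope.

Section Stretch2.
Variables (V E : finType) (src tgt : E -> V) (n : nat) (F : fieldType).
Local Notation SV := (sV V E n).
Local Notation SE := (sE E n).
Local Notation ss := (@ssrc V E src n).
Local Notation st := (@stgt V E tgt n).
Local Notation P := (qpath ss st).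
Local Notation M := (KQ ss st F).
Local Notation qm := (@Defs.mulq SV SE ss st F).
Local Notation pbq := (pb ss st F).
Local Notation visq := (@vis SV SE st).

Definition isinl (v : SV) : bool := if v is inl _ then true else false.
Definition isal (a : E) (v : SV) : bool := if v is inr (b, _) then b == a else true.
Definition isb (a : E) (v : SV) : bool := if v is inr (b, _) then b == a else false.

Definition gp (b : E) (k : 'I_n) (l : nat) : SV * seq SE :=
  (inr (b, k), [seq (b, inord j : 'I_n.+1) | j <- iota k.+1 l]).

Lemma ss_lift b (k : 'I_n) : ss (b, lift ord0 k) = inr (b, k).
Proof. by rewrite /ssrc /= liftK. Qed.

Lemma inord_lift0 (k : 'I_n) : inord k.+1 = lift ord0 k :> 'I_n.+1.
Proof. by apply: ord_inj; rewrite lift0 inordK // ltnS ltn_ord. Qed.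

Lemma st_lift b (k : 'I_n) (k1 : (k.+1 < n)%N) :
  st (b, lift ord0 k) = inr (b, Ordinal k1).
Proof.
have -> : lift ord0 k = lift ord_max (Ordinal k1) :> 'I_n.+1.
  by apply: ord_inj; rewrite lift0 lift_max.
by rewrite /stgt /= liftK.
Qed.

Lemma gp_spec b (k : 'I_n) l : (k + l < n)%N ->
  is_qpath ss st (gp b k l) && all (isb b) (visq (gp b k l)).
Proof.
elim: l k => [|l IH] k hkl; first by rewrite /= eqxx.
have k1 : (k.+1 < n)%N by lia.
have h2 : (Ordinal k1 + l < n)%N by rewrite /=; lia.
have := IH _ h2.
rewrite /gp /vis /= qpath_cons inord_lift0 ss_lift st_lift eqxx /=.
by rewrite !eqxx.
Qed.

Lemma char_good es (k : 'I_n) b : is_qpath ss st (inr (b, k), es) ->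
  ~~ has isinl (map st es) ->
  exists l, (k + l < n)%N /\ es = [seq (b, inord j : 'I_n.+1) | j <- iota k.+1 l].
Proof.
elim: es k => [|[c j] es IH] k.
  by move=> _ _; exists 0%N; rewrite addn0 ltn_ord.
rewrite qpath_cons /= => /andP [hs hp] /norP [hst hrest].
move: hs hst hp; rewrite /ssrc /stgt /=.
case: unliftP => [k0 -> | ->] //= /eqP [ec ek]; subst c k0.
case: unliftP => [k2 e2 | e2] //= _ hp.
have vk2 : nat_of_ord k2 = k.+1.
  by have := congr1 (@nat_of_ord _) e2; rewrite lift0 lift_max.
have [l [hl ->]] := IH k2 hp hrest.
exists l.+1; split; first by rewrite vk2 in hl; lia.
by rewrite vk2 /= inord_lift0.
Qed.

Definition Lraw b : seq (SV * seq SE) :=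
  [seq gp b k l | k <- enum 'I_n, l <- iota 0 (n - k)].
Definition Lall : seq (SV * seq SE) := [seq x | b <- enum E, x <- Lraw b].

Lemma mem_Lraw b x : x \in Lraw b -> exists (k : 'I_n) l, (k + l < n)%N /\ x = gp b k l.
Proof.
move/allpairsPdep => [k [l [_ hl ->]]]; exists k, l; split => //.
by move: hl; rewrite mem_iota; lia.
Qed.

Lemma gp_in_Lraw b (k : 'I_n) l : (k + l < n)%N -> gp b k l \in Lraw b.
Proof.
move=> h; apply/allpairsPdep; exists k, l; split => //; first exact: mem_enum.
rewrite mem_iota; lia.
Qed.

Lemma uniq_Lraw b : uniq (Lraw b).
Proof.
apply: allpairs_uniq_dep; [exact: enum_uniq | move=> k _; exact: iota_uniq |].
move=> [k1 l1] [k2 l2] _ _ /= H.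
have e1 : k1 = k2 by case: H.
have e2 : l1 = l2.
  by have := congr1 (fun x => size x.2) H; rewrite /= !size_map !size_iota.
by subst.
Qed.

Lemma uniq_Lall : uniq Lall.
Proof.
apply: allpairs_uniq_dep; [exact: enum_uniq | move=> b _; exact: uniq_Lraw |].
move=> [b1 x1] [b2 x2] /allpairsPdep [b1' [x1' [_ h1 e1]]]
  /allpairsPdep [b2' [x2' [_ h2 e2]]] /= ex.
case: e1 => <- <- in h1; case: e2 => <- <- in h2.
have [k1 [l1 [_ ex1]]] := mem_Lraw h1.
have [k2 [l2 [_ ex2]]] := mem_Lraw h2.
have eb : b1 = b2.
  by have := congr1 fst ex; rewrite ex1 ex2 /= => -[].
by subst.
Qed.

Lemma tri m : sumn [seq m - k | k <- iota 0 m]%N = (m.+1 * m %/ 2)%N.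
Proof.
elim: m => [|m IH] //.
have -> : iota 0 m.+1 = 0%N :: [seq k.+1 | k <- iota 0 m].
  by rewrite /= -(iotaDl 1).
rewrite map_cons /= -map_comp (@eq_map _ _ _ (fun k => m - k)%N); last first.
  by move=> k /=; rewrite subSS.
rewrite IH subn0.
have -> : (m.+2 * m.+1 = m.+1 * 2 + m.+1 * m)%N by lia.
by rewrite divnMDl.
Qed.

Lemma size_Lraw b : size (Lraw b) = (n.+1 * n %/ 2)%N.
Proof.
rewrite size_allpairs_dep.
have -> : [seq size (iota 0 (n - k)) | k : 'I_n <- enum 'I_n] = [seq (n - k)%N | k <- iota 0 n].
  by rewrite -val_enum_ord -map_comp; apply: eq_map => k; rewrite /= size_iota.
exact: tri.
Qed.

Lemma sumn_const (T : Type) (s : seq T) c : sumn [seq c | _ <- s] = (c * size s)%N.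
Proof. by elim: s => [|x s IH] /=; rewrite ?muln0 // IH mulnS addnC. Qed.

Lemma size_Lall : size Lall = (#|E| * (n.+1 * n %/ 2))%N.
Proof.
rewrite size_allpairs_dep (eq_map (@size_Lraw)) sumn_const -cardE.
by rewrite mulnC.
Qed.

End Stretch2.

End S2.
Import S2.

Module S3.

Set Implicit Arguments.
Unset Strict Implicit.
Unset Printing Implicit Defensive.
Import GRing.Theory.
Local Open Scope ring_scope.

Section Stretch3.
Variables (V E : finType) (src tgt : E -> V) (n : nat) (F : fieldType).
Local Notation SV := (sV V E n).
Local Notation SE := (sE E n).
Local Notation ss := (@ssrc V E src n).
Local Notation st := (@stgt V E tgt n).
Local Notation P := (qpath ss st).
Local Notation M := (KQ ss st F).
Local Notation qm := (@Defs.mulq SV SE ss st F).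
Local Notation pbq := (pb ss st F).
Local Notation visq := (@vis SV SE st).
Local Notation gp := (@S2.gp V E n).
Local Notation Lraw := (@S2.Lraw V E n).
Local Notation Lall := (@S2.Lall V E n).
Local Notation isinl := (@S2.isinl V E n).
Local Notation isal := (@S2.isal V E n).

Definition good (x : SV * seq SE) := ~~ has isinl (visq x).

Lemma good_gp b (k : 'I_n) l : (k + l < n)%N -> good (gp b k l).
Proof.
move=> h; have /andP [_ ha] := gp_spec src tgt b h.
rewrite /good -all_predC; apply: sub_all ha; by case=> [u|[c j]].
Qed.

Lemma good_char (r : P) : good (val r) ->
  exists b (k : 'I_n) l, (k + l < n)%N /\ val r = gp b k l.
Proof.
case: r => [[v es] hr] /=; rewrite /good /vis /= => /norP [hv hes].
case: v hv hr => // -[b k] _ hr.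
have [l [hl ->]] := char_good hr hes.
by exists b, k, l.
Qed.

Lemma good_in_al (r : P) a : good (val r) -> has (isal a) (visq (val r)) ->
  val r \in Lraw a.
Proof.
move=> hg ha; have [b [k [l [hl er]]]] := good_char hg.
rewrite er in ha *; have /andP [_ hb] := gp_spec src tgt b hl.
have eb : b = a.
  case/hasP: ha => v vin hv; move: (allP hb v vin) hv.
  by case: v {vin} => // -[c j] /= /eqP cb /eqP ca; rewrite -cb -ca.
by subst; apply: gp_in_Lraw.
Qed.

Lemma good_in_all (r : P) : good (val r) -> val r \in Lall.
Proof.
move=> hg; have [b [k [l [hl er]]]] := good_char hg.
apply/allpairsPdep; exists b, (val r); split => //; first exact: mem_enum.
by rewrite er; apply: gp_in_Lraw.
Qed.

Lemma Hs_eps : Hs isinl (eps src tgt n F).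
Proof. by rewrite /eps; apply: Hs_sum => v _; apply: Hs_pb. Qed.

Lemma Hs_theta f : Hs isinl (@theta V E src tgt n F f).
Proof.
by rewrite /theta; apply: Hs_sum => p _; apply: Hs_scale; apply: Hs_pb.
Qed.

Lemma Hs_wvert a k : Hs (isal a) (wvert src tgt F a k).
Proof. by apply: Hs_pb; rewrite /= eqxx. Qed.

Lemma isinl_al a (v : SV) : isinl v -> isal a v.
Proof. by case: v. Qed.

Definition epsI (g : seq (KQ src tgt F)) :=
  ideal_gen (fun x => x \in eps src tgt n F :: [seq @theta V E src tgt n F x | x <- g]).

Lemma W1 g w : epsI g w -> forall r : P, good (val r) -> w@_r = 0.
Proof.
move=> hw r hr.
suff H : Hs isinl w by apply: H.
apply: Hs_ideal hw => x; rewrite in_cons => /orP [/eqP -> | /mapP [y _ ->]].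
  exact: Hs_eps.
exact: Hs_theta.
Qed.

Lemma bad_term g (r : P) c : has isinl (visq (val r)) -> epsI g << c *g r >>.
Proof.
case: r => [[v es] hr] /= hb.
have [es1 [es2 [u [ees hpe]]]] :
    exists es1 es2 u, es = es1 ++ es2 /\ pend st (v, es1) = inl u.
  move: hb; rewrite /vis /= => /orP [| /hasP [x /mapP [e ein ->] hx]].
    by case: v {hr} => // u _; exists [::], es, u.
  case/splitPr: ein => s1 s2; exists (rcons s1 e), s2.
  case Ee: (st e) hx => [u|] // _; exists u; split; first by rewrite cat_rcons.
  by rewrite /pend /= map_rcons last_rcons.
subst es.
have /andP [h1 h2] : is_qpath ss st (v, es1) && is_qpath ss st (inl u, es2).
  by rewrite -hpe -qpath_cat.
pose q1 : P := exist _ (v, es1) h1.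
pose q2 : P := exist _ (inl u, es2) h2.
pose r0 : P := exist _ (v, es1 ++ es2) hr.
have -> : (<< c *g r0 >> : M) =
          qm (qm << c *g q1 >> (eps src tgt n F)) << 1 *g q2 >>.
  rewrite /eps mulq_sumr (bigD1 u) //= big1 ?addr0; last first.
    move=> w ne; rewrite /vertex pb_triv_r /= hpe.
    by case: eqP => // -[e]; rewrite e eqxx in ne.
  rewrite /vertex pb_triv_r /= hpe eqxx mulqUU mulr1 /Cq /pcat /= hpe eqxx.
  rewrite (@pb_val _ _ ss st F r0); exact/esym/scaleU.
by apply: ideal_term; rewrite mem_head.
Qed.

Lemma W2 g w : (forall r : P, good (val r) -> w@_r = 0) -> epsI g w.
Proof.
move=> H; rewrite (monalgE w); apply: ideal_sum => r rin; apply: bad_term.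
apply/negPn/negP => hg; move: rin; by rewrite -mcoeff_neq0 H ?eqxx.
Qed.

Lemma coef_sumU (s : seq P) (u : M) r : uniq s ->
  (\sum_(p <- s) << u@_p *g p >>)@_r = if r \in s then u@_r else 0.
Proof.
move=> us; rewrite mcoeff_sum (eq_bigr (fun p => u@_p *+ (p == r))); last first.
  by move=> p _; exact: t4.
case: ifP => rin.
  rewrite (bigD1_seq r) //= eqxx mulr1n big1 ?addr0 // => p /negbTE ->.
  exact: mulr0n.
rewrite big_seq big1 // => p pin.
have -> : (p == r) = false by apply/eqP => epr; rewrite -epr pin in rin.
exact: mulr0n.
Qed.

Lemma basis_qd (U W : M -> Prop) (L : seq P) (N : nat) :
  uniq L -> size L = N -> (forall p, p \in L -> U << p >>) ->
  (forall w, W w -> forall p, p \in L -> w@_p = 0) ->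
  (forall u, U u -> W (u - \sum_(p <- L) << u@_p *g p >>)) ->
  quot_dim U W N.
Proof.
move=> uL <- HU HW Hsp.
case EL: L uL HU HW Hsp => [|p0 L'] uL HU HW Hsp.
  exists (fun _ => 0); split; first by case.
  split; first by move=> c _ [m hm]; exfalso; rewrite /= ltn0 in hm.
  move=> u Uu; exists (fun _ => 0); have := Hsp u Uu; by rewrite big_nil big_ord0.
set s := p0 :: L'.
exists (fun i => << nth p0 s i >>); split; [|split].
- move=> i; apply: HU; apply: mem_nth; exact: ltn_ord.
- move=> c Wc j; have := HW _ Wc (nth p0 s j) (mem_nth p0 (ltn_ord j)).
  rewrite mcoeff_sum (eq_bigr (fun i => c i * (1 *+ (nth p0 s i == nth p0 s j)))); last first.
    by move=> i _; rewrite mcoeffZ; congr (_ * _); exact: t4.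
  rewrite (bigD1 j) //= big1 ?addr0.
    by rewrite eqxx mulr1n mulr1.
  move=> i ne; rewrite nth_uniq ?ltn_ord //.
  have -> : (nat_of_ord i == nat_of_ord j) = false by apply/negbTE.
  by rewrite mulr0n mulr0.
- move=> u Uu; exists (fun i => u@_(nth p0 s i)).
  suff -> : \sum_(i < size s) u@_(nth p0 s i) *: << nth p0 s i >> =
            \sum_(p <- s) << u@_p *g p >> by exact: Hsp.
  rewrite (big_nth p0) big_mkord; apply: eq_bigr => i _; exact: scaleU.
Qed.

End Stretch3.

End S3.
Import S3.

Set Implicit Arguments.
Unset Strict Implicit.
Unset Printing Implicit Defensive.
Import GRing.Theory.
Local Open Scope ring_scope.

Section Fin.
Variables (V E : finType) (src tgt : E -> V) (n : nat) (F : fieldType).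
Local Notation SV := (sV V E n).
Local Notation SE := (sE E n).
Local Notation ss := (@ssrc V E src n).
Local Notation st := (@stgt V E tgt n).
Local Notation P := (qpath ss st).
Local Notation M := (KQ ss st F).
Local Notation qm := (@Defs.mulq SV SE ss st F).
Local Notation pbq := (pb ss st F).

Lemma vertexU (u : SV) :
  pbq (u, [::]) = << (exist _ (u, [::]) isT : P) >>.
Proof. by rewrite /pb insubT. Qed.

Lemma count_Lraw b : count (is_qpath ss st) (Lraw V n b) = size (Lraw V n b).
Proof.
rewrite -count_predT; apply: eq_in_count => x /mem_Lraw [k [l [hl ->]]].
by have /andP [-> _] := gp_spec src tgt b hl.
Qed.

Lemma count_Lall : count (is_qpath ss st) (Lall V E n) = size (Lall V E n).
Proof.
rewrite -count_predT; apply: eq_in_count => x /allpairsPdep [b [y [_ hy ->]]].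
have [k [l [hl ->]]] := mem_Lraw hy.
by have /andP [-> _] := gp_spec src tgt b hl.
Qed.

Lemma good_of_Lraw b x : x \in Lraw V n b -> good tgt x.
Proof. by move=> /mem_Lraw [k [l [hl ->]]]; apply: good_gp. Qed.

Lemma good_of_Lall x : x \in Lall V E n -> good tgt x.
Proof. by move=> /allpairsPdep [b [y [_ hy ->]]]; apply: good_of_Lraw hy. Qed.

End Fin.

Theorem proposition2p3 (F : fieldType) (V E : finType) (src tgt : E -> V)
    (g : seq (KQ src tgt F)) (A : nat) :
  (1 <= A)%N ->
  (forall x, x \in g -> uniform x) ->
  minimal_gens g ->
  admissible (ideal_gen (fun x => x \in g)) ->
  (exists d, quot_dim (fun _ => True) (ideal_gen (fun x => x \in g)) d) ->
  (* generators of I~_A + <eps>, lifted to F Q~_A *)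
  let gt := [seq @theta V E src tgt A.-1 F x | x <- g] in
  let eps_ideal := ideal_gen (fun x => x \in eps src tgt A.-1 F :: gt) in
  (forall alpha : E,
     quot_dim
       (ideal_gen (fun x =>
          x \in [seq wvert src tgt F alpha k | k <- enum 'I_A.-1] ++
                eps src tgt A.-1 F :: gt))
       eps_ideal
       (A * (A - 1) %/ 2)) /\
  quot_dim (fun _ => True) eps_ideal (#|E| * (A * (A - 1) %/ 2)).
Proof.
move=> hA _ _ _ _ gt eps_ideal.
have eN : (A * (A - 1) %/ 2 = A.-1.+1 * A.-1 %/ 2)%N by rewrite subn1 prednK.
rewrite eN.
have epsE : eps_ideal = @epsI V E src tgt A.-1 F g by [].
rewrite epsE; clear eN epsE eps_ideal.
set n := A.-1.
split.
- move=> alpha.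
  apply: (@basis_qd V E src tgt n F _ _ (pmap insub (Lraw V n alpha))).
  + exact: pmap_sub_uniq (uniq_Lraw _ _ _).
  + by rewrite size_pmap_sub count_Lraw size_Lraw.
  + move=> p; rewrite mem_pmap_sub => /mem_Lraw [k [l [hl ep]]].
    pose w := wvert src tgt F alpha k.
    have -> : << p >> = Defs.mulq (Defs.mulq w w) << p >>.
      rewrite /w /wvert /vertex {2}vertexU pb_triv_l /= eqxx.
      by rewrite -vertexU pb_triv_l ep /= eqxx.
    apply: ideal_term; rewrite mem_cat; apply/orP; left.
    by apply/mapP; exists k => //; exact: mem_enum.
  + move=> w hw p; rewrite mem_pmap_sub => hp; apply: (W1 hw).
    exact: good_of_Lraw hp.
  + move=> u hu; apply: W2 => r hr.
    have Hu : Hs (isal alpha) u.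
      apply: Hs_ideal hu => x; rewrite mem_cat => /orP [/mapP [k _ ->]|].
        exact: Hs_wvert.
      rewrite in_cons => /orP [/eqP ->|/mapP [y _ ->]].
        apply: (Hs_mono (@isinl_al V E n alpha)); exact: Hs_eps.
      apply: (Hs_mono (@isinl_al V E n alpha)); exact: Hs_theta.
    rewrite mcoeffB coef_sumU; last exact: pmap_sub_uniq (uniq_Lraw _ _ _).
    case: ifP => rin; first by rewrite subrr.
    rewrite Hu ?subr0 //; apply/negP => ha.
    by move: rin; rewrite mem_pmap_sub (good_in_al hr ha).
- apply: (@basis_qd V E src tgt n F _ _ (pmap insub (Lall V E n))).
  + exact: pmap_sub_uniq (uniq_Lall _ _ _).
  + by rewrite size_pmap_sub count_Lall size_Lall.
  + by [].
  + move=> w hw p; rewrite mem_pmap_sub => hp; apply: (W1 hw).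
    exact: good_of_Lall hp.
  + move=> u _; apply: W2 => r hr.
    rewrite mcoeffB coef_sumU; last exact: pmap_sub_uniq (uniq_Lall _ _ _).
    by rewrite mem_pmap_sub (good_in_all hr) subrr.
Qed.
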